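(* Let $\triangle ABC$ have side lengths $a=|BC|>b=|CA|>c=|AB|$ and angles $\alpha=\angle A$, $\beta=\angle B$, $\gamma=\angle C$, and suppose $60^\circ<\beta<90^\circ<\alpha$. For $x\in\{a,b,c\}$ let $W_x$ denote the largest area of an equilateral triangle contained in the closed triangle $\triangle ABC$ having one of its sides lying on side $x$. Then the maximum of $W_a,W_b,W_c$ is attained on the long side $a$, and the minimum is attained: (i) on the middle side $b$ when $\alpha/2+\beta<120^\circ$, and on both the short side $c$ and the middle side $b$ when $\alpha/2+\beta=120^\circ$; (ii) on the short side $c$ when $\alpha/2+\beta>120^\circ$.
   Context: An equilateral triangle of largest area contained in $\triangle ABC$ with one side lying on a given side of $\triangle ABC$ is called the wedged equilateral triangle (WET) on that side; it need not have all three vertices on the boundary of $\triangle ABC$. The max (resp. min) WET is the one of largest (resp. smallest) area among the three sides. *)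

(* Defs.v *)
From Stdlib Require Import Reals Lra.
Open Scope R_scope.

Definition point := (R * R)%type.

Definition pdist (P Q : point) : R :=
  sqrt ((fst P - fst Q)^2 + (snd P - snd Q)^2).

Definition cross (P Q S : point) : R :=
  (fst Q - fst P) * (snd S - snd P) - (snd Q - snd P) * (fst S - fst P).

Definition tri_area (P Q S : point) : R := Rabs (cross P Q S) / 2.

Definition angle (P Q S : point) : R :=
  acos (((fst Q - fst P) * (fst S - fst P) + (snd Q - snd P) * (snd S - snd P))
        / (pdist P Q * pdist P S)).

Definition on_segment (P Q X : point) : Prop :=
  exists t, 0 <= t <= 1 /\
    X = ((1 - t) * fst P + t * fst Q, (1 - t) * snd P + t * snd Q).

Definition in_triangle (P Q S X : point) : Prop :=
  exists u v w, 0 <= u /\ 0 <= v /\ 0 <= w /\ u + v + w = 1 /\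
    X = (u * fst P + v * fst Q + w * fst S, u * snd P + v * snd Q + w * snd S).

Definition equilateral (P Q S : point) : Prop :=
  0 < pdist P Q /\ pdist P Q = pdist Q S /\ pdist Q S = pdist S P.

Definition wedged_areas (A B C X Y : point) (r : R) : Prop :=
  exists P Q S : point,
    equilateral P Q S /\
    (forall Z, in_triangle P Q S Z -> in_triangle A B C Z) /\
    (forall Z, on_segment P Q Z -> on_segment X Y Z) /\
    r = tri_area P Q S.

(* Main.v *)
Require Import Defs.
From Stdlib Require Import Reals Lra Psatz.
Open Scope R_scope.

Definition sq (P Q : point) : R := (fst P - fst Q)^2 + (snd P - snd Q)^2.

Definition apex (P Q : point) (k : R) : point :=
  ((fst P + fst Q)/2 - k*(snd Q - snd P), (snd P + snd Q)/2 + k*(fst Q - fst P)).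

Lemma sqr_inj x y : 0 <= x -> 0 <= y -> x*x = y*y -> x = y.
Proof. intros; nra. Qed.

Lemma sq_le x y : 0 <= y -> x*x <= y*y -> x <= y.
Proof. intros; nra. Qed.

Lemma sq_lt x y : 0 <= y -> x*x < y*y -> x < y.
Proof. intros; nra. Qed.

Lemma sq_nonneg P Q : 0 <= sq P Q.
Proof. unfold sq; apply Rplus_le_le_0_compat; apply pow2_ge_0. Qed.

Lemma pdist_sq P Q : pdist P Q = sqrt (sq P Q).
Proof. reflexivity. Qed.

Lemma sq_sym P Q : sq P Q = sq Q P.
Proof. unfold sq; ring. Qed.

Lemma equi_sq P Q S : equilateral P Q S ->
  sq Q S = sq P Q /\ sq S P = sq P Q /\ 0 < sq P Q.
Proof.
  unfold equilateral; rewrite !pdist_sq; intros [H0 [H1 H2]].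
  assert (E1 : sq P Q = sq Q S) by (apply sqrt_inj; auto using sq_nonneg).
  assert (E2 : sq Q S = sq S P) by (apply sqrt_inj; auto using sq_nonneg).
  split; [|split]; try congruence.
  destruct (Rle_lt_dec (sq P Q) 0) as [h|h]; auto.
  rewrite sqrt_neg_0 in H0; auto; lra.
Qed.

Lemma equi_area P Q S : equilateral P Q S -> tri_area P Q S = sqrt 3 / 4 * sq P Q.
Proof.
  intros H; destruct (equi_sq _ _ _ H) as [E1 [E2 E3]].
  assert (L : 4 * (cross P Q S)^2 = 4 * sq P Q * sq S P - (sq P Q + sq S P - sq Q S)^2)
    by (destruct P, Q, S; unfold cross, sq; cbn [fst snd]; ring).
  rewrite E1, E2 in L.
  unfold tri_area.
  assert (Rabs (cross P Q S) = sqrt 3 / 2 * sq P Q).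
  { apply sqr_inj. apply Rabs_pos.
    apply Rmult_le_pos; [|lra]. apply Rmult_le_pos; [apply sqrt_pos|lra].
    rewrite <- Rabs_mult, Rabs_pos_eq by nra.
    replace (sqrt 3 / 2 * sq P Q * (sqrt 3 / 2 * sq P Q)) with
      ((sqrt 3 * sqrt 3) / 4 * (sq P Q * sq P Q)) by field.
    rewrite sqrt_sqrt by lra. nra. }
  rewrite H0; field.
Qed.

Lemma apex_equi P Q k : 0 < sq P Q -> k * k = 3/4 -> equilateral P Q (apex P Q k).
Proof.
  intros H Hk. unfold equilateral; rewrite !pdist_sq.
  destruct P as [p1 p2], Q as [q1 q2].
  assert (E1 : sq (q1,q2) (apex (p1,p2) (q1,q2) k) = sq (p1,p2) (q1,q2)).
  { transitivity ((1/4 + k*k) * sq (p1,p2) (q1,q2)). { unfold sq, apex; cbn [fst snd]; field. }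
    rewrite Hk; field. }
  assert (E2 : sq (apex (p1,p2) (q1,q2) k) (p1,p2) = sq (p1,p2) (q1,q2)).
  { transitivity ((1/4 + k*k) * sq (p1,p2) (q1,q2)). { unfold sq, apex; cbn [fst snd]; field. }
    rewrite Hk; field. }
  rewrite E1, E2. split; auto. apply sqrt_lt_R0; auto.
Qed.

Lemma tri_convex A B C P Q S Z :
  in_triangle A B C P -> in_triangle A B C Q -> in_triangle A B C S ->
  in_triangle P Q S Z -> in_triangle A B C Z.
Proof.
  intros [p1 [p2 [p3 [hp1 [hp2 [hp3 [hp HP]]]]]]]
         [q1 [q2 [q3 [hq1 [hq2 [hq3 [hq HQ]]]]]]]
         [s1 [s2 [s3 [hs1 [hs2 [hs3 [hs HS]]]]]]]
         [u [v [w [hu [hv [hw [h HZ]]]]]]].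
  exists (u*p1+v*q1+w*s1), (u*p2+v*q2+w*s2), (u*p3+v*q3+w*s3).
  split; [nra|]. split; [nra|]. split; [nra|]. split.
  - replace (u * p1 + v * q1 + w * s1 + (u * p2 + v * q2 + w * s2) + (u * p3 + v * q3 + w * s3))
      with (u*(p1+p2+p3) + v*(q1+q2+q3) + w*(s1+s2+s3)) by ring.
    rewrite hp, hq, hs; lra.
  - subst; simpl; f_equal; ring.
Qed.

Lemma seg_convex X Y P Q Z :
  on_segment X Y P -> on_segment X Y Q -> on_segment P Q Z -> on_segment X Y Z.
Proof.
  intros [t1 [h1 HP]] [t2 [h2 HQ]] [t [h HZ]].
  exists ((1-t)*t1 + t*t2). split; [nra|]. subst; simpl; f_equal; ring.
Qed.

Lemma lub_ge (E : R -> Prop) m r : is_lub E m -> E r -> r <= m.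
Proof. intros [H _] Hr; apply H; auto. Qed.

Lemma lub_le (E : R -> Prop) m V : is_lub E m -> (forall r, E r -> r <= V) -> m <= V.
Proof. intros [_ H] Hr; apply H; intros r; apply Hr. Qed.

Lemma core_b (d1 d2 e1 e2 t1 t2 u v r3 X : R) :
  0 <= t1 <= 1 -> 0 <= t2 <= 1 -> 0 <= u -> 0 <= v ->
  0 <= d1*e1 + d2*e2 -> 0 < X -> X*X = (d1*e2 - d2*e1)*(d1*e2 - d2*e1) ->
  r3 * r3 = 3 -> 0 < r3 ->
  ((u-t2)*d1 + v*e1)^2 + ((u-t2)*d2 + v*e2)^2 = ((u-t1)*d1 + v*e1)^2 + ((u-t1)*d2 + v*e2)^2 ->
  ((u-t1)*d1 + v*e1)^2 + ((u-t1)*d2 + v*e2)^2 = (t2-t1)^2 * (d1^2+d2^2) ->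
  0 < (t2-t1)^2 * (d1^2+d2^2) ->
  (t2-t1)^2 * (d1^2+d2^2) <= (2*X/(X + r3*(d1*e1 + d2*e2)))^2 * (d1^2+d2^2).
Proof.
  intros Ht1 Ht2 Hu Hv HG HX HXD Hr3 Hr3p HSQ HSP Hpos.
  set (b2 := d1^2+d2^2) in *. set (G := d1*e1+d2*e2) in *.
  set (D := d1*e2 - d2*e1) in *. set (Dl := t2 - t1) in *.
  assert (Hb2 : 0 < b2) by (pose proof (pow2_ge_0 Dl); destruct (Rle_lt_dec b2 0); [nra|auto]).
  assert (HDl : Dl <> 0) by (intro h; rewrite h in Hpos; lra).
  assert (Diff : ((u-t1)*d1 + v*e1)^2 + ((u-t1)*d2 + v*e2)^2
                 - (((u-t2)*d1 + v*e1)^2 + ((u-t2)*d2 + v*e2)^2)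
                 = Dl * ((2*u - t1 - t2) * b2 + 2*v*G)) by (unfold Dl, b2, G; ring).
  assert (E1 : (2*u - t1 - t2) * b2 + 2*v*G = 0).
  { rewrite HSQ in Diff. replace (((u - t1) * d1 + v * e1) ^ 2 + ((u - t1) * d2 + v * e2) ^ 2 -
       (((u - t1) * d1 + v * e1) ^ 2 + ((u - t1) * d2 + v * e2) ^ 2)) with 0 in Diff by ring.
    destruct (Rmult_integral _ _ (eq_sym Diff)); [contradiction|auto]. }
  assert (Lag : (((u-t1)*d1 + v*e1)^2 + ((u-t1)*d2 + v*e2)^2) * b2
                = ((u - t1) * b2 + v*G)^2 + v^2 * (D*D)) by (unfold b2, G, D; ring).
  assert (E2 : (u - t1) * b2 + v*G = Dl * b2 / 2) by (unfold Dl in *; lra).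
  rewrite HSP, E2 in Lag.
  assert (E3 : v^2 * (D*D) = 3/4 * (Dl^2 * b2 * b2)) by lra.
  assert (E4 : 2*v*X = r3 * Rabs Dl * b2).
  { apply sqr_inj. nra. apply Rmult_le_pos; [|lra]. apply Rmult_le_pos; [lra|apply Rabs_pos].
    replace (r3 * Rabs Dl * b2 * (r3 * Rabs Dl * b2)) with ((r3*r3) * (Rabs Dl * Rabs Dl) * (b2*b2)) by ring.
    rewrite <- Rabs_mult, Rabs_pos_eq by nra. rewrite Hr3.
    replace (2 * v * X * (2 * v * X)) with (4 * v^2 * (X*X)) by ring. rewrite HXD. nra. }
  assert (E5 : 2*v*G <= (t1+t2)*b2) by nra.
  assert (E6 : r3 * Rabs Dl * G <= (t1+t2) * X).
  { assert (h : 2*v*G*X <= (t1+t2)*b2*X) by (apply Rmult_le_compat_r; lra).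
    replace (2*v*G*X) with (G * (2*v*X)) in h by ring. rewrite E4 in h.
    apply (Rmult_le_reg_r b2); auto. lra. }
  assert (E7 : t1 + t2 <= 2 - Rabs Dl).
  { unfold Dl; destruct (Rcase_abs (t2 - t1)) as [h|h]; [rewrite Rabs_left by lra|rewrite Rabs_right by lra]; lra. }
  assert (E8 : Rabs Dl * (X + r3*G) <= 2*X) by nra.
  assert (HZ : 0 < X + r3*G) by nra.
  assert (E9 : Rabs Dl <= 2*X/(X + r3*G)).
  { apply (Rmult_le_reg_r (X + r3*G)); auto. unfold Rdiv. rewrite Rmult_assoc, Rinv_l by lra. lra. }
  apply Rmult_le_compat_r; [lra|].
  replace (Dl^2) with (Rabs Dl * Rabs Dl) by (rewrite <- Rabs_mult, Rabs_pos_eq by nra; ring).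
  pose proof (Rabs_pos Dl). nra.
Qed.

Definition dotC (A B C : point) : R :=
  (fst A - fst C)*(fst B - fst C) + (snd A - snd C)*(snd B - snd C).
Definition lam (A B C : point) : R :=
  2 * Rabs (cross A B C) / (Rabs (cross A B C) + sqrt 3 * dotC A B C).

Lemma seg_l P Q : on_segment P Q P.
Proof. exists 0. split; [lra|]. destruct P, Q; simpl; f_equal; ring. Qed.
Lemma seg_r P Q : on_segment P Q Q.
Proof. exists 1. split; [lra|]. destruct P, Q; simpl; f_equal; ring. Qed.
Lemma tri_3 P Q S : in_triangle P Q S S.
Proof. exists 0, 0, 1. repeat split; try lra. destruct P, Q, S; simpl; f_equal; ring. Qed.
Lemma tri_1 P Q S : in_triangle P Q S P.
Proof. exists 1, 0, 0. repeat split; try lra. destruct P, Q, S; simpl; f_equal; ring. Qed.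
Lemma tri_2 P Q S : in_triangle P Q S Q.
Proof. exists 0, 1, 0. repeat split; try lra. destruct P, Q, S; simpl; f_equal; ring. Qed.

Lemma sqrt3_sq : sqrt 3 * sqrt 3 = 3.
Proof. apply sqrt_sqrt; lra. Qed.
Lemma sqrt3_pos : 0 < sqrt 3.
Proof. apply sqrt_lt_R0; lra. Qed.

Lemma ub_b A B C r : 0 <= dotC A B C -> cross A B C <> 0 -> wedged_areas A B C C A r ->
  r <= sqrt 3 / 4 * ((lam A B C)^2 * sq C A).
Proof.
  intros HG HD [P [Q [S [He [Hin [Hseg Hr]]]]]].
  rewrite Hr, equi_area by auto.
  apply Rmult_le_compat_l. pose proof sqrt3_pos; lra.
  destruct (equi_sq _ _ _ He) as [E1 [E2 E3]].
  destruct (Hseg P (seg_l P Q)) as [t1 [Ht1 HP]].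
  destruct (Hseg Q (seg_r P Q)) as [t2 [Ht2 HQ]].
  destruct (Hin S (tri_3 P Q S)) as [u [v [w [hu [hv [hw [huvw HS]]]]]]].
  assert (hw' : w = 1 - u - v) by lra. subst w.
  destruct A as [xa ya], B as [xb yb], C as [xc yc].
  unfold lam, dotC, cross in *. cbn [fst snd] in *.
  subst P Q S.
  unfold sq in *; cbn [fst snd] in *.
  replace ((xc - xa)^2 + (yc - ya)^2) with ((xa - xc)^2 + (ya - yc)^2) by ring.
  replace ((xb - xa) * (yc - ya) - (yb - ya) * (xc - xa)) with
    ((xa - xc)*(yb - yc) - (ya - yc)*(xb - xc)) by ring.
  replace ((xb - xa) * (yc - ya) - (yb - ya) * (xc - xa)) with
    ((xa - xc)*(yb - yc) - (ya - yc)*(xb - xc)) in HD by ring.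
  set (Dv := (xa - xc)*(yb - yc) - (ya - yc)*(xb - xc)) in *.
  replace (((1 - t1) * xc + t1 * xa - ((1 - t2) * xc + t2 * xa)) ^ 2 +
           ((1 - t1) * yc + t1 * ya - ((1 - t2) * yc + t2 * ya)) ^ 2)
    with ((t2 - t1)^2 * ((xa - xc)^2 + (ya - yc)^2)) in * by ring.
  apply (core_b (xa - xc) (ya - yc) (xb - xc) (yb - yc) t1 t2 u v (sqrt 3) (Rabs Dv));
    auto using sqrt3_sq, sqrt3_pos.
  - apply Rabs_pos_lt; auto.
  - rewrite <- Rabs_mult, Rabs_pos_eq by nra. unfold Dv; ring.
  - transitivity (((1 - t2) * xc + t2 * xa - (u * xa + v * xb + (1 - u - v) * xc)) ^ 2 +
      ((1 - t2) * yc + t2 * ya - (u * ya + v * yb + (1 - u - v) * yc)) ^ 2); [ring|].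
    rewrite E1, <- E2. ring.
  - rewrite <- E2. ring.
Qed.

Lemma ub_c A B C r : wedged_areas A B C A B r -> r <= sqrt 3 / 4 * sq A B.
Proof.
  intros [P [Q [S [He [Hin [Hseg Hr]]]]]].
  rewrite Hr, equi_area by auto.
  apply Rmult_le_compat_l. pose proof sqrt3_pos; lra.
  destruct (Hseg P (seg_l P Q)) as [t1 [Ht1 HP]].
  destruct (Hseg Q (seg_r P Q)) as [t2 [Ht2 HQ]].
  destruct A as [xa ya], B as [xb yb].
  subst P Q. unfold sq; cbn [fst snd].
  replace (((1 - t1) * xa + t1 * xb - ((1 - t2) * xa + t2 * xb)) ^ 2 +
           ((1 - t1) * ya + t1 * yb - ((1 - t2) * ya + t2 * yb)) ^ 2)
    with ((t2 - t1)^2 * ((xa - xb)^2 + (ya - yb)^2)) by ring.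
  assert (0 <= (xa - xb)^2 + (ya - yb)^2) by (pose proof (pow2_ge_0 (xa-xb)); pose proof (pow2_ge_0 (ya-yb)); lra).
  assert ((t2 - t1)^2 <= 1) by nra. nra.
Qed.

Definition kk (A B C : point) : R := sqrt 3 * cross A B C / (2 * Rabs (cross A B C)).

Lemma kk_sq A B C : cross A B C <> 0 -> kk A B C * kk A B C = 3/4.
Proof.
  intros H. unfold kk.
  assert (HX : Rabs (cross A B C) <> 0) by (apply Rabs_no_R0; auto).
  replace (sqrt 3 * cross A B C / (2 * Rabs (cross A B C)) *
          (sqrt 3 * cross A B C / (2 * Rabs (cross A B C))))
   with ((sqrt 3 * sqrt 3) * (cross A B C * cross A B C) / (4 * (Rabs (cross A B C) * Rabs (cross A B C)))) by (field; auto).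
  rewrite <- Rabs_mult, Rabs_pos_eq by nra. rewrite sqrt3_sq. field; auto.
Qed.

Lemma wit_a A B C :
  cross A B C <> 0 -> 0 < dotC A B C -> 0 < sq B C ->
  sqrt 3 * (sq B C - dotC A B C) <= Rabs (cross A B C) ->
  Rabs (cross A B C) <= sqrt 3 * dotC A B C ->
  wedged_areas A B C B C (sqrt 3 / 4 * ((lam A B C)^2 * sq B C)).
Proof.
  intros HD HG Ha Hmu Hlam.
  pose proof sqrt3_pos as Hr.
  assert (HX : 0 < Rabs (cross A B C)) by (apply Rabs_pos_lt; auto).
  assert (HZ : 0 < Rabs (cross A B C) + sqrt 3 * dotC A B C) by nra.
  assert (Hl0 : 0 < lam A B C).
  { unfold lam. apply Rdiv_lt_0_compat; lra. }
  assert (Hl1 : lam A B C <= 1).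
  { unfold lam. apply (Rmult_le_reg_r (Rabs (cross A B C) + sqrt 3 * dotC A B C)); auto.
    unfold Rdiv. rewrite Rmult_assoc, Rinv_l by lra. lra. }
  set (l := lam A B C) in *.
  set (Q := ((1 - l) * fst B + l * fst C, (1 - l) * snd B + l * snd C)).
  assert (HPQ : sq B Q = l^2 * sq B C).
  { unfold Q, sq; destruct B, C; cbn [fst snd]; ring. }
  assert (Hk := kk_sq A B C HD).
  exists B, Q, (apex B Q (kk A B C)).
  split; [|split; [|split]].
  - apply apex_equi; auto. rewrite HPQ. apply Rmult_lt_0_compat; [apply pow_lt; lra|auto].
  - intros Z HZ'. apply (tri_convex A B C B Q (apex B Q (kk A B C)) Z); auto.
    + apply tri_2.
    + exists 0, (1 - l), l. repeat split; try lra. destruct A, B, C; unfold Q; simpl; f_equal; ring.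
    + set (mu := sqrt 3 * sq B C / (Rabs (cross A B C) + sqrt 3 * dotC A B C)).
      assert (Hmu0 : 0 <= mu) by (unfold mu; apply Rmult_le_pos; [nra|left; apply Rinv_0_lt_compat; lra]).
      assert (Hmu1 : mu <= 1).
      { unfold mu. apply (Rmult_le_reg_r (Rabs (cross A B C) + sqrt 3 * dotC A B C)); auto.
        unfold Rdiv. rewrite Rmult_assoc, Rinv_l by lra. lra. }
      exists mu, 0, (1 - mu). repeat split; try lra.
      unfold mu, Q, l, lam, kk, apex in *.
      set (X := Rabs (cross A B C)) in *.
      destruct A as [xa ya], B as [xb yb], C as [xc yc].
      unfold sq, dotC, cross in *; cbn [fst snd] in *.
      f_equal; field; lra.
  - intros Z HZ'. apply (seg_convex B C B Q Z); auto.
    + apply seg_l.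
    + exists l. split; [lra|]. unfold Q; destruct B, C; simpl; f_equal; ring.
  - rewrite equi_area. rewrite HPQ; reflexivity. apply apex_equi; auto. rewrite HPQ. apply Rmult_lt_0_compat; [apply pow_lt; lra|auto].
Qed.

Lemma wit_b A B C :
  cross A B C <> 0 -> 0 < dotC A B C -> 0 < sq C A ->
  sqrt 3 * (sq C A - dotC A B C) <= Rabs (cross A B C) ->
  Rabs (cross A B C) <= sqrt 3 * dotC A B C ->
  wedged_areas A B C C A (sqrt 3 / 4 * ((lam A B C)^2 * sq C A)).
Proof.
  intros HD HG Ha Hmu Hlam.
  pose proof sqrt3_pos as Hr.
  assert (HX : 0 < Rabs (cross A B C)) by (apply Rabs_pos_lt; auto).
  assert (HZ : 0 < Rabs (cross A B C) + sqrt 3 * dotC A B C) by nra.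
  assert (Hl0 : 0 < lam A B C).
  { unfold lam. apply Rdiv_lt_0_compat; lra. }
  assert (Hl1 : lam A B C <= 1).
  { unfold lam. apply (Rmult_le_reg_r (Rabs (cross A B C) + sqrt 3 * dotC A B C)); auto.
    unfold Rdiv. rewrite Rmult_assoc, Rinv_l by lra. lra. }
  set (l := lam A B C) in *.
  set (P := ((1 - (1 - l)) * fst C + (1 - l) * fst A, (1 - (1 - l)) * snd C + (1 - l) * snd A)).
  assert (HPQ : sq P A = l^2 * sq C A).
  { unfold P, sq; destruct A, C; cbn [fst snd]; ring. }
  assert (Hk := kk_sq A B C HD).
  exists P, A, (apex P A (kk A B C)).
  split; [|split; [|split]].
  - apply apex_equi; auto. rewrite HPQ. apply Rmult_lt_0_compat; [apply pow_lt; lra|auto].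
  - intros Z HZ'. apply (tri_convex A B C P A (apex P A (kk A B C)) Z); auto.
    + exists (1 - l), 0, l. repeat split; try lra. destruct A, B, C; unfold P; simpl; f_equal; ring.
    + apply tri_1.
    + set (mu := sqrt 3 * sq C A / (Rabs (cross A B C) + sqrt 3 * dotC A B C)).
      assert (Hmu0 : 0 <= mu) by (unfold mu; apply Rmult_le_pos; [nra|left; apply Rinv_0_lt_compat; lra]).
      assert (Hmu1 : mu <= 1).
      { unfold mu. apply (Rmult_le_reg_r (Rabs (cross A B C) + sqrt 3 * dotC A B C)); auto.
        unfold Rdiv. rewrite Rmult_assoc, Rinv_l by lra. lra. }
      exists 0, mu, (1 - mu). repeat split; try lra.
      unfold mu, P, l, lam, kk, apex in *.
      set (X := Rabs (cross A B C)) in *.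
      destruct A as [xa ya], B as [xb yb], C as [xc yc].
      unfold sq, dotC, cross in *; cbn [fst snd] in *.
      f_equal; field; lra.
  - intros Z HZ'. apply (seg_convex C A P A Z); auto.
    + exists (1 - l). split; [lra|]. unfold P; destruct A, C; simpl; f_equal; ring.
    + apply seg_r.
  - rewrite equi_area. rewrite HPQ; reflexivity. apply apex_equi; auto. rewrite HPQ; apply Rmult_lt_0_compat; [apply pow_lt; lra|auto].
Qed.

Lemma wit_c A B C :
  cross A B C <> 0 -> 0 < sq A B ->
  sqrt 3 * (sq B C - dotC A B C) <= Rabs (cross A B C) ->
  sqrt 3 * (sq C A - dotC A B C) <= Rabs (cross A B C) ->
  wedged_areas A B C A B (sqrt 3 / 4 * sq A B).
Proof.
  intros HD Hc Hu Hv.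
  pose proof sqrt3_pos as Hr.
  assert (HX : 0 < Rabs (cross A B C)) by (apply Rabs_pos_lt; auto).
  assert (Hk := kk_sq A B C HD).
  exists A, B, (apex A B (kk A B C)).
  split; [|split; [|split]].
  - apply apex_equi; auto.
  - intros Z HZ'. apply (tri_convex A B C A B (apex A B (kk A B C)) Z); auto.
    + apply tri_1.
    + apply tri_2.
    + set (X := Rabs (cross A B C)) in *.
      set (u := 1/2 - sqrt 3 * (sq B C - dotC A B C) / (2 * X)).
      set (v := 1/2 - sqrt 3 * (sq C A - dotC A B C) / (2 * X)).
      assert (Hc2 : sq B C + sq C A - 2 * dotC A B C = sq A B)
        by (unfold sq, dotC; destruct A, B, C; cbn [fst snd]; ring).
      assert (Hu0 : 0 <= u).
      { unfold u. assert (sqrt 3 * (sq B C - dotC A B C) / (2 * X) <= 1/2); [|lra].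
        apply (Rmult_le_reg_r (2*X)); [lra|]. unfold Rdiv. rewrite Rmult_assoc, Rinv_l by lra. lra. }
      assert (Hv0 : 0 <= v).
      { unfold v. assert (sqrt 3 * (sq C A - dotC A B C) / (2 * X) <= 1/2); [|lra].
        apply (Rmult_le_reg_r (2*X)); [lra|]. unfold Rdiv. rewrite Rmult_assoc, Rinv_l by lra. lra. }
      assert (Hw0 : 0 <= 1 - u - v).
      { replace (1 - u - v) with (sqrt 3 * sq A B / (2 * X)) by (unfold u, v; rewrite <- Hc2; field; lra).
        apply Rmult_le_pos; [nra|left; apply Rinv_0_lt_compat; lra]. }
      exists u, v, (1 - u - v). repeat split; try lra.
      unfold u, v, kk, apex in *. fold X.
      destruct A as [xa ya], B as [xb yb], C as [xc yc].
      unfold X in *.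
      unfold sq, dotC, cross in *; cbn [fst snd] in *.
      f_equal; field; lra.
  - intros Z HZ'. apply (seg_convex A B A B Z); auto using seg_l, seg_r.
  - rewrite equi_area. reflexivity. apply apex_equi; auto.
Qed.

Definition KBf (A B C : point) : R :=
  (fst C - fst B) * (fst A - fst B) + (snd C - snd B) * (snd A - snd B).
Definition KAf (A B C : point) : R :=
  (fst B - fst A) * (fst C - fst A) + (snd B - snd A) * (snd C - snd A).

Section Ids.
Variables A B C : point.
Lemma L1 : sq B C + sq C A - sq A B = 2 * dotC A B C.
Proof. destruct A, B, C; unfold sq, dotC; cbn [fst snd]; ring. Qed.
Lemma L2 : KBf A B C = sq B C - dotC A B C.
Proof. destruct A, B, C; unfold KBf, sq, dotC; cbn [fst snd]; ring. Qed.
Lemma L3 : KAf A B C = sq C A - dotC A B C.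
Proof. destruct A, B, C; unfold KAf, sq, dotC; cbn [fst snd]; ring. Qed.
Lemma L4 : sq B C * sq A B - KBf A B C * KBf A B C = cross A B C * cross A B C.
Proof. destruct A, B, C; unfold KBf, sq, cross; cbn [fst snd]; ring. Qed.
Lemma L5 : sq A B * sq C A - KAf A B C * KAf A B C = cross A B C * cross A B C.
Proof. destruct A, B, C; unfold KAf, sq, cross; cbn [fst snd]; ring. Qed.
Lemma L6 : sq B C * sq C A - dotC A B C * dotC A B C = cross A B C * cross A B C.
Proof. destruct A, B, C; unfold dotC, sq, cross; cbn [fst snd]; ring. Qed.
Lemma L7 : cross A B C * cross A B C - KAf A B C * KBf A B C = dotC A B C * sq A B.
Proof. destruct A, B, C; unfold KAf, KBf, dotC, sq, cross; cbn [fst snd]; ring. Qed.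
Lemma L8 : KAf A B C + KBf A B C = sq A B.
Proof. destruct A, B, C; unfold KAf, KBf, sq; cbn [fst snd]; ring. Qed.
End Ids.

Lemma acos_cs K p q Dd : 0 < p -> 0 < q -> p*q - K*K = Dd*Dd ->
  cos (acos (K/(sqrt p * sqrt q))) = K/(sqrt p * sqrt q) /\
  sin (acos (K/(sqrt p * sqrt q))) = Rabs Dd/(sqrt p * sqrt q).
Proof.
  intros Hp Hq H.
  assert (Hs : sqrt p * sqrt q * (sqrt p * sqrt q) = p * q).
  { replace (sqrt p * sqrt q * (sqrt p * sqrt q)) with ((sqrt p * sqrt p) * (sqrt q * sqrt q)) by ring.
    rewrite !sqrt_sqrt; lra. }
  assert (Hs0 : 0 < sqrt p * sqrt q) by (apply Rmult_lt_0_compat; apply sqrt_lt_R0; auto).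
  set (s := sqrt p * sqrt q) in *.
  assert (Hb : -1 <= K/s <= 1).
  { assert (h : K/s * (K/s) <= 1).
    { replace (K/s*(K/s)) with ((K*K)/(s*s)) by (field; lra). rewrite Hs.
      apply (Rmult_le_reg_r (p*q)); [nra|]. unfold Rdiv. rewrite Rmult_assoc, Rinv_l by nra. nra. }
    nra. }
  split. apply cos_acos; auto.
  rewrite sin_acos by auto. apply sqrt_lem_1.
  - unfold Rsqr. nra.
  - apply Rmult_le_pos; [apply Rabs_pos|left; apply Rinv_0_lt_compat; auto].
  - unfold Rsqr. replace (Rabs Dd / s * (Rabs Dd / s)) with ((Rabs Dd * Rabs Dd)/(s*s)) by (field; lra).
    replace (1 - K / s * (K / s)) with ((s*s - K*K)/(s*s)) by (field; lra).
    rewrite <- Rabs_mult, Rabs_pos_eq by nra. rewrite Hs, H. reflexivity.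
Qed.

Lemma cross_pos_sq A B C : cross A B C <> 0 -> 0 < sq A B.
Proof.
  intros H.
  assert (E : sq A B * sq C A - KAf A B C * KAf A B C = cross A B C * cross A B C) by apply L5.
  assert (0 < cross A B C * cross A B C) by (destruct (Rlt_or_le 0 (cross A B C)); nra).
  pose proof (sq_nonneg A B); pose proof (sq_nonneg C A).
  destruct (Rle_lt_dec (sq A B) 0); [|auto].
  assert (sq A B = 0) by lra. rewrite H3 in E. nra.
Qed.

Theorem mainTheorem4 (A B C : point) (Wa Wb Wc : R) :
  cross A B C <> 0 ->
  pdist B C > pdist C A -> pdist C A > pdist A B ->
  PI / 3 < angle B C A -> angle B C A < PI / 2 -> PI / 2 < angle A B C ->
  is_lub (wedged_areas A B C B C) Wa ->
  is_lub (wedged_areas A B C C A) Wb ->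
  is_lub (wedged_areas A B C A B) Wc ->
  (Wb < Wa /\ Wc < Wa) /\
  (angle A B C / 2 + angle B C A < 2 * PI / 3 -> Wb < Wc) /\
  (angle A B C / 2 + angle B C A = 2 * PI / 3 -> Wb = Wc) /\
  (angle A B C / 2 + angle B C A > 2 * PI / 3 -> Wc < Wb).
Proof.
  intros HD Hab Hbc Hb1 Hb2 Ha1 HWa HWb HWc.
  pose proof PI_RGT_0 as HPI.
  pose proof sqrt3_pos as Hr. pose proof sqrt3_sq as Hr2.
  assert (Hc2 : 0 < sq A B) by (apply (cross_pos_sq A B C); auto).
  rewrite !pdist_sq in Hab, Hbc.
  apply sqrt_lt_0_alt in Hab. apply sqrt_lt_0_alt in Hbc.
  pose proof (L1 A B C) as E1. pose proof (L2 A B C) as E2. pose proof (L3 A B C) as E3.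
  pose proof (L4 A B C) as E4. pose proof (L5 A B C) as E5. pose proof (L6 A B C) as E6.
  pose proof (L7 A B C) as E7. pose proof (L8 A B C) as E8.
  assert (HXD : Rabs (cross A B C) * Rabs (cross A B C) = cross A B C * cross A B C)
    by (rewrite <- Rabs_mult, Rabs_pos_eq by nra; auto).
  assert (HX : 0 < Rabs (cross A B C)) by (apply Rabs_pos_lt; auto).
  set (D := cross A B C) in *. set (X := Rabs D) in *.
  set (G := dotC A B C) in *.
  set (a2 := sq B C) in *. set (b2 := sq C A) in *. set (c2 := sq A B) in *.
  assert (HG : 0 < G) by lra.
  assert (Hbe : angle B C A = acos (KBf A B C / (sqrt a2 * sqrt c2))).
  { unfold angle. rewrite (pdist_sq B A), sq_sym. reflexivity. }
  assert (Hal : angle A B C = acos (KAf A B C / (sqrt c2 * sqrt b2))).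
  { unfold angle. rewrite (pdist_sq A C), (sq_sym A C). reflexivity. }
  destruct (acos_cs (KBf A B C) a2 c2 D) as [cb sb]; try lra.
  destruct (acos_cs (KAf A B C) c2 b2 D) as [ca sa]; try lra.
  rewrite <- Hbe in cb, sb. rewrite <- Hal in ca, sa.
  change (Rabs D) with X in sa, sb.
  set (be := angle B C A) in *. set (al := angle A B C) in *.
  set (KB := KBf A B C) in *. set (KA := KAf A B C) in *.
  assert (Ha : sqrt a2 * sqrt a2 = a2) by (apply sqrt_sqrt; lra).
  assert (Hb : sqrt b2 * sqrt b2 = b2) by (apply sqrt_sqrt; lra).
  assert (Hc : sqrt c2 * sqrt c2 = c2) by (apply sqrt_sqrt; lra).
  assert (Hap : 0 < sqrt a2) by (apply sqrt_lt_R0; lra).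
  assert (Hbp : 0 < sqrt b2) by (apply sqrt_lt_R0; lra).
  assert (Hcp : 0 < sqrt c2) by (apply sqrt_lt_R0; lra).
  set (a := sqrt a2) in *. set (b := sqrt b2) in *. set (c := sqrt c2) in *.
  pose proof (acos_bound (KB / (a * c))) as Bbe. rewrite <- Hbe in Bbe.
  pose proof (acos_bound (KA / (c * b))) as Bal. rewrite <- Hal in Bal.

  assert (Hcb1 : cos be < 1/2).
  { rewrite <- cos_PI3. apply cos_decreasing_1; lra. }
  assert (Hcb0 : 0 < cos be).
  { rewrite <- cos_PI2. apply cos_decreasing_1; lra. }
  assert (Hca : cos al < 0) by (apply cos_lt_0; lra).
  rewrite cb in Hcb1, Hcb0. rewrite ca in Hca.
  assert (HKB0 : 0 < KB).
  { assert (h : KB = KB / (a*c) * (a*c)) by (field; lra). rewrite h. apply Rmult_lt_0_compat; nra. }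
  assert (HKB1 : 2 * KB < a * c).
  { assert (h : KB = KB / (a*c) * (a*c)) by (field; lra). rewrite h. nra. }
  assert (HKA : KA < 0).
  { assert (h : KA = KA / (c*b) * (c*b)) by (field; lra). rewrite h.
    assert (0 < c*b) by nra. nra. }
  assert (F1 : sqrt 3 * (a2 - G) <= X).
  { left. apply sq_lt; [lra|]. rewrite HXD, <- E4, <- E2.
    replace (sqrt 3 * KB * (sqrt 3 * KB)) with (3 * (KB*KB)) by (transitivity ((sqrt 3 * sqrt 3) * (KB*KB)); [rewrite Hr2; ring|ring]).
    assert (a2 * c2 = (a*c)*(a*c)) by (rewrite <- Ha, <- Hc; ring).
    nra. }
  assert (F2 : sqrt 3 * (b2 - G) <= X) by (rewrite <- E3; nra).
  assert (F3 : X <= sqrt 3 * G).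
  { apply sq_le; [nra|]. rewrite HXD, <- E6.
    replace (sqrt 3 * G * (sqrt 3 * G)) with (3 * (G*G)) by (transitivity ((sqrt 3 * sqrt 3) * (G*G)); [rewrite Hr2; ring|ring]).
    nra. }
  set (ga := PI - al - be).
  assert (Sg : sin ga = X/(a*b)).
  { unfold ga. replace (PI - al - be) with (PI - (al+be)) by ring.
    rewrite sin_PI_x, sin_plus, sa, cb, ca, sb.
    replace KB with (c*c - KA) by (rewrite Hc; lra). field; lra. }
  assert (Cg : cos ga = G/(a*b)).
  { unfold ga. replace (PI - al - be) with (PI - (al+be)) by ring.
    rewrite Rtrigo_facts.cos_pi_minus, cos_plus, sa, cb, ca, sb.
    assert (h: X*X - KA*KB = G*(c*c)) by (rewrite Hc, HXD; lra).
    replace (-(KA/(c*b)*(KB/(a*c)) - X/(c*b)*(X/(a*c)))) with ((X*X - KA*KB)/(a*b*(c*c))) by (field; lra).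
    rewrite h. field; lra. }
  set (Z := X + sqrt 3 * G).
  assert (HZ : 0 < Z) by (unfold Z; nra).
  assert (Sg3 : sin (ga + PI/3) = Z/(2*a*b)).
  { rewrite sin_plus, cos_PI3, sin_PI3, Sg, Cg. unfold Z. field; lra. }
  assert (Hga0 : 0 < ga).
  { destruct (Rlt_or_le 0 ga) as [h|h]; auto.
    assert (h1 : 0 <= sin (- ga)) by (apply sin_ge_0; unfold ga in *; lra).
    rewrite sin_neg, Sg in h1.
    assert (0 < X/(a*b)) by (apply Rdiv_lt_0_compat; nra). lra. }
  assert (Hga1 : ga < PI/6) by (unfold ga; lra).
  assert (Sal : sin al = sin (be + ga)).
  { rewrite <- sin_PI_x. f_equal. unfold ga; ring. }
  assert (T1 : sin (ga + PI/3) < sin al).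
  { rewrite Sal. apply sin_increasing_1; unfold ga in *; lra. }
  set (l := lam A B C).
  assert (Hl : l = 2*X/Z) by reflexivity.
  assert (Hl0 : 0 < l) by (rewrite Hl; apply Rdiv_lt_0_compat; lra).
  assert (Id1 : l*a - c = (sin al - sin (ga + PI/3)) * (2*a*b*c/Z)).
  { rewrite sa, Sg3, Hl. field; lra. }
  assert (Id2 : l*b - c = (sin be - sin (ga + PI/3)) * (2*a*b*c/Z)).
  { rewrite sb, Sg3, Hl. field; lra. }
  assert (Hp : 0 < 2*a*b*c/Z) by (apply Rdiv_lt_0_compat; [nra|lra]).
  assert (C1 : c < l*a) by nra.
  assert (EWb : Wb = sqrt 3 / 4 * (l^2 * b2)).
  { apply Rle_antisym.
    - apply (lub_le _ _ _ HWb). intros r Hr'. apply ub_b; [fold G; lra|auto|auto].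
    - apply (lub_ge _ _ _ HWb). apply wit_b; [exact HD|exact HG|fold b2; lra|exact F2|exact F3]. }
  assert (EWc : Wc = sqrt 3 / 4 * c2).
  { apply Rle_antisym.
    - apply (lub_le _ _ _ HWc). intros r Hr'. apply (ub_c A B C); auto.
    - apply (lub_ge _ _ _ HWc). apply wit_c; [exact HD|exact Hc2|exact F1|exact F2]. }
  assert (EWa : sqrt 3 / 4 * (l^2 * a2) <= Wa).
  { apply (lub_ge _ _ _ HWa). apply wit_a; [exact HD|exact HG|fold a2; lra|exact F1|exact F3]. }
  assert (Pa : l^2 * a2 = (l*a)*(l*a)) by (rewrite <- Ha; ring).
  assert (Pb : l^2 * b2 = (l*b)*(l*b)) by (rewrite <- Hb; ring).
  assert (Pc : c2 = c*c) by auto.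
  rewrite Pa in EWa. rewrite Pb in EWb. rewrite Pc in EWc.
  assert (Hr4 : 0 < sqrt 3 / 4) by lra.
  split; [split|split; [|split]].
  - rewrite EWb. eapply Rlt_le_trans; [|exact EWa].
    apply Rmult_lt_compat_l; auto.
    assert (Hba : b < a) by (apply sq_lt; lra).
    assert (l*b < l*a) by (apply Rmult_lt_compat_l; auto).
    assert (0 < l*b) by nra. nra.
  - rewrite EWc. eapply Rlt_le_trans; [|exact EWa].
    apply Rmult_lt_compat_l; auto. nra.
  - intros H. assert (h : be < ga + PI/3) by (unfold ga; lra).
    assert (h2 : sin be < sin (ga + PI/3)) by (apply sin_increasing_1; lra).
    assert (h3 : l*b < c) by nra.
    assert (0 < l*b) by (apply Rmult_lt_0_compat; auto).
    rewrite EWb, EWc. apply Rmult_lt_compat_l; auto. nra.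
  - intros H. assert (h : be = ga + PI/3) by (unfold ga; lra).
    assert (h3 : l*b = c) by (rewrite h in Id2; nra).
    rewrite EWb, EWc, h3. reflexivity.
  - intros H. assert (h : ga + PI/3 < be) by (unfold ga; lra).
    assert (h2 : sin (ga + PI/3) < sin be) by (apply sin_increasing_1; lra).
    assert (h3 : c < l*b) by nra.
    rewrite EWb, EWc. apply Rmult_lt_compat_l; auto.
    assert (0 < l*b) by (apply Rmult_lt_0_compat; auto). nra.
Qed.
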